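(* Let $\mathcal{F}\subset K[x_1,\ldots,x_n]$ be a chordal polynomial set with $x_1<\cdots<x_n$ as a perfect elimination ordering. Let $\mathcal{T}_1,\ldots,\mathcal{T}_r$ be the triangular sets computed by Wang's method applied to $\mathcal{F}$, i.e. the sets $\mathcal{P}$ from triples $(\mathcal{P},\mathcal{Q},0)\in\mathcal{N}(\mathcal{F})$ (reached by the algorithm) such that $\mathcal{P}$ contains no nonzero constant. Then $G(\mathcal{T}_j)\subseteq G(\mathcal{F})$ for $j=1,\ldots,r$.
   Context: Let $K$ be a field and $K[x_1,\ldots,x_n]$ the polynomial ring, with the variables ordered $x_1<\cdots<x_n$. For a polynomial $F$, $\mathrm{supp}(F)$ is the set of variables effectively appearing in $F$. For a set of polynomials $\mathcal{P}$, $\mathrm{supp}(\mathcal{P})=\bigcup_{F\in\mathcal{P}}\mathrm{supp}(F)$. For a nonconstant $F$, $\mathrm{lv}(F)$ is the greatest variable in $\mathrm{supp}(F)$. For a polynomial set $\mathcal{P}$ and $1\le i\le n$, $\mathcal{P}^{(i)}=\{P\in\mathcal{P}:\mathrm{lv}(P)=x_i\}$; constants belong to no $\mathcal{P}^{(i)}$. The associated graph $G(\mathcal{P})$ is the undirected graph whose vertex set is $\mathrm{supp}(\mathcal{P})$, with an edge between distinct $x_i,x_j$ iff some $F\in\mathcal{P}$ has $x_i,x_j\in\mathrm{supp}(F)$. For graphs, $G\subseteq G'$ means that $G$ is a subgraph of $G'$, i.e. both the vertex set and the edge set are contained. An ordering of the vertices of a graph is a perfect elimination ordering if, for every vertex $v$,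 the set consisting of $v$ and all neighbours of $v$ smaller than $v$ is a clique. A polynomial set $\mathcal{P}$ is called chordal with $x_1<\cdots<x_n$ as a perfect elimination ordering if the restriction of this ordering to $\mathrm{supp}(\mathcal{P})$ is a perfect elimination ordering of $G(\mathcal{P})$. For a nonconstant polynomial $F$ with $\mathrm{lv}(F)=x_k$, write $F=I x_k^d+R$ with $d=\deg(F,x_k)$, $I\in K[x_1,\ldots,x_{k-1}]$, and $\deg(R,x_k)<d$. Then $\mathrm{ini}(F)=I$ is the initial of $F$ and $\mathrm{tail}(F)=R$ is the tail of $F$. For $\mathrm{lv}(T)=x_i$, $\mathrm{prem}(P,T)$ is the pseudo-remainder of $P$ by $T$ with respect to $x_i$. The zero polynomial has empty support. Wang's decomposition tree: $\mathcal{N}(\mathcal{F})$ is the smallest set of triples $(\mathcal{P},\mathcal{Q},i)$, where $\mathcal{P},\mathcal{Q}$ are polynomial sets and $0\le i\le n$, satisfying the following: - $(\mathcal{F},\emptyset,n)\in\mathcal{N}(\mathcal{F})$. - If $(\mathcal{P},\mathcal{Q},i)\in\mathcal{N}(\mathcal{F})$ with $i\ge1$ and $\#\mathcal{P}^{(i)}>1$, then for every $T\in\mathcal{P}^{(i)}$ of minimal degree in $x_i$ among the elements of $\mathcal{P}^{(i)}$, both of the following triples belong to $\mathcal{N}(\mathcal{F})$: - the left child $\big((\mathcal{P}\setminus\mathcal{P}^{(i)})\cup\{T\}\cup\{\mathrm{prem}(P,T):P\in\mathcal{P}^{(i)}\},\ \mathcal{Q}\cup\{\mathrm{ini}(T)\},\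 i\big)$; - the right child $\big((\mathcal{P}\setminus\{T\})\cup\{\mathrm{ini}(T),\mathrm{tail}(T)\},\ \mathcal{Q},\ i\big)$. - If $(\mathcal{P},\mathcal{Q},i)\in\mathcal{N}(\mathcal{F})$ with $i\ge1$ and $\#\mathcal{P}^{(i)}\le1$, then $(\mathcal{P},\mathcal{Q},i-1)\in\mathcal{N}(\mathcal{F})$. Wang's method starts from $(\mathcal{F},\emptyset,n)$ and generates triples of $\mathcal{N}(\mathcal{F})$ according to these rules. It outputs the pairs $(\mathcal{P},\mathcal{Q})$ with $(\mathcal{P},\mathcal{Q},0)$ reached and $\mathcal{P}$ containing no nonzero constant. *)

(* Defs.v *)
(* Multivariate polynomials K[x_1,...,x_n] are encoded as
   iterated univariate polynomials: mpoly K 0 = K and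
   mpoly K n.+1 = {poly (mpoly K n)}, the outermost variable being x_{n+1}.
   Variables are indexed by 1..n (x_k <-> k). *)
From HB Require Import structures.
From mathcomp Require Import all_boot all_order all_algebra.
From Stdlib Require Import ClassicalEpsilon.
Set Implicit Arguments. Unset Strict Implicit. Unset Printing Implicit Defensive.
Import Order.TTheory GRing.Theory Num.Theory.
Local Open Scope ring_scope.

Fixpoint mpoly (K : fieldType) (n : nat) : idomainType :=
  match n with
  | 0 => K
  | m.+1 => {poly (mpoly K m)}
  end.

Section Defs.
Variable K : fieldType.

Fixpoint supp (n : nat) : mpoly K n -> seq nat :=
  match n return mpoly K n -> seq nat with
  | 0 => fun _ => [::]
  | m.+1 => fun p : {poly (mpoly K m)} =>
      (if (1 < size p)%N then [:: m.+1] else [::]) ++ flatten [seq @supp m c | c <- p]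
  end.

(* lv(F): greatest variable in supp(F) (0 for constants, which therefore
   belong to no P^(i), i >= 1) *)
Definition lv (n : nat) (p : mpoly K n) : nat := foldr maxn 0%N (supp p).

Fixpoint deg (n : nat) (k : nat) : mpoly K n -> nat :=
  match n return mpoly K n -> nat with
  | 0 => fun _ => 0%N
  | m.+1 => fun p : {poly (mpoly K m)} =>
      if k == m.+1 then (size p).-1 else \max_(c <- p) @deg m k c
  end.

(* initial of F w.r.t. lv(F) (meaningless, returns F, for constants) *)
Fixpoint ini (n : nat) : mpoly K n -> mpoly K n :=
  match n return mpoly K n -> mpoly K n with
  | 0 => fun c => c
  | m.+1 => fun p : {poly (mpoly K m)} =>
      if (1 < size p)%N then (lead_coef p)%:P else (@ini m p`_0)%:P
  end.

(* tail of F w.r.t. lv(F) (returns 0 for constants) *)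
Fixpoint tail (n : nat) : mpoly K n -> mpoly K n :=
  match n return mpoly K n -> mpoly K n with
  | 0 => fun _ => 0
  | m.+1 => fun p : {poly (mpoly K m)} =>
      if (1 < size p)%N then p - (lead_coef p)%:P * 'X^((size p).-1)
      else (@tail m p`_0)%:P
  end.

(* R is the pseudo-remainder of P by T w.r.t. x_i:
   ini(T)^e * P = Q * T + R with deg(R,x_i) < deg(T,x_i),
   e = max(deg(P,x_i) - deg(T,x_i) + 1, 0). It is unique (integral domain). *)
Definition is_prem (n : nat) (i : nat) (P T R : mpoly K n) : Prop :=
  exists Q : mpoly K n,
    ini T ^+ ((deg i P).+1 - deg i T) * P = Q * T + R /\ (deg i R < deg i T)%N.

Definition prem (n : nat) (P T : mpoly K n) : mpoly K n :=
  epsilon (inhabits 0) (is_prem (lv T) P T).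

(* support of a polynomial set (sets are represented by finite sequences) *)
Definition suppS (n : nat) (S : seq (mpoly K n)) : seq nat :=
  flatten [seq supp p | p <- S].

Definition edge (n : nat) (S : seq (mpoly K n)) (a b : nat) : Prop :=
  a <> b /\ exists2 f, f \in S & (a \in supp f) && (b \in supp f).

Definition subgraph (n : nat) (S S' : seq (mpoly K n)) : Prop :=
  (forall v, v \in suppS S -> v \in suppS S') /\
  (forall a b, edge S a b -> edge S' a b).

(* x_1 < ... < x_n restricted to supp(S) is a perfect elimination ordering of G(S):
   for every vertex v, {v} u {u < v neighbour of v} is a clique *)
Definition chordal (n : nat) (S : seq (mpoly K n)) : Prop :=
  forall v, v \in suppS S ->
  forall a b,
    (a = v \/ (a < v)%N /\ edge S a v) ->
    (b = v \/ (b < v)%N /\ edge S b v) ->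
    a <> b -> edge S a b.

Definition level (n : nat) (S : seq (mpoly K n)) (i : nat) : seq (mpoly K n) :=
  [seq p <- S | lv p == i].

Inductive wang_node (n : nat) (F : seq (mpoly K n)) :
    seq (mpoly K n) -> seq (mpoly K n) -> nat -> Prop :=
  | wang_root : wang_node F F [::] n
  | wang_left (P Q : seq (mpoly K n)) (i : nat) (T : mpoly K n) :
      wang_node F P Q i -> (1 <= i)%N ->
      (1 < size (undup (level P i)))%N ->
      T \in level P i ->
      (forall P', P' \in level P i -> (deg i T <= deg i P')%N) ->
      wang_node F
        ([seq p <- P | lv p != i] ++ T :: [seq prem p T | p <- level P i])
        (ini T :: Q) i
  | wang_right (P Q : seq (mpoly K n)) (i : nat) (T : mpoly K n) :
      wang_node F P Q i -> (1 <= i)%N ->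
      (1 < size (undup (level P i)))%N ->
      T \in level P i ->
      (forall P', P' \in level P i -> (deg i T <= deg i P')%N) ->
      wang_node F ([seq p <- P | p != T] ++ [:: ini T; tail T]) Q i
  | wang_down (P Q : seq (mpoly K n)) (i : nat) :
      wang_node F P Q i.+1 ->
      (size (undup (level P i.+1)) <= 1)%N ->
      wang_node F P Q i.

End Defs.

(* Main.v *)
Require Import Defs.
From HB Require Import structures.
From mathcomp Require Import all_boot all_order all_algebra polyXY.
From mathcomp Require Import ring zify.
From Stdlib Require Import ClassicalEpsilon.
Set Implicit Arguments. Unset Strict Implicit. Unset Printing Implicit Defensive.
Import GRing.Theory.
Local Open Scope ring_scope.
Section S.
Variable K : fieldType.
Fixpoint psi (k n : nat) : {rmorphism mpoly K n -> {poly mpoly K n}} :=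
  match n return {rmorphism mpoly K n -> {poly mpoly K n}} with
  | 0 => (polyC : {rmorphism _ -> _})
  | m.+1 => if k == m.+1 then (map_poly polyC : {rmorphism _ -> _})
            else ((swapXY \o map_poly (psi k m)) : {rmorphism _ -> _})
  end.

Lemma psiS k m (p : mpoly K m.+1) : psi k m.+1 p =
  if k == m.+1 then map_poly polyC p else swapXY (map_poly (psi k m) p).
Proof. by rewrite /=; case: (k == m.+1). Qed.

Lemma psi_inj k n : injective (psi k n).
Proof.
elim: n => [|m IH] /=; first exact: polyC_inj.
case: (k == m.+1) => /=.
  by apply: map_inj_poly; [exact: polyC_inj| rewrite raddf0].
move=> p q /= /(can_inj swapXYK) /map_inj_poly; apply=> //; exact: raddf0.
Qed.

Lemma max_pred (T : Type) (s : seq T) (f : T -> nat) :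
  (\max_(c <- s) (f c).-1 = (\max_(c <- s) f c).-1)%N.
Proof.
elim: s => [|x s IH]; first by rewrite !big_nil.
rewrite !big_cons IH. lia.
Qed.

Lemma psi_deg k n (p : mpoly K n) : deg k p = (size (psi k n p)).-1.
Proof.
elim: n p => [|m IH] p /=; first by rewrite size_polyC; case: (_ != _).
case: (k == m.+1) => /=; first by rewrite size_map_polyC.
rewrite -sizeYE /sizeY size_map_inj_poly ?raddf0 //; last exact: psi_inj.
under eq_bigr do rewrite IH.
rewrite max_pred (big_nth 0) big_mkord.
by apply: congr1; apply: eq_bigr => j _; rewrite coef_map.
Qed.

Lemma supp0 n : supp (0 : mpoly K n) = [::].
Proof. by case: n => //= m; rewrite polyseq0. Qed.

Lemma supp_mem m (p : mpoly K m.+1) v :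
  v \in supp p -> (v = m.+1 /\ (1 < size p)%N) \/ exists j, v \in supp p`_j.
Proof.
rewrite /= mem_cat; case/orP.
  by case: ifP => // H; rewrite inE => /eqP ->; left.
case/flatten_mapP => c cp vc; right.
have [j jlt cj] := nthP 0 cp; exists j; by rewrite cj.
Qed.

Lemma mem_supp_coef m (p : mpoly K m.+1) v j :
  v \in supp p`_j -> v \in supp p.
Proof.
case: (ltnP j (size p)) => jl.
  by move=> vs; rewrite /= mem_cat; apply/orP; right; apply/flatten_mapP; exists p`_j => //; exact: mem_nth.
by rewrite nth_default // supp0.
Qed.

Lemma mem_supp_top m (p : mpoly K m.+1) : (1 < size p)%N -> m.+1 \in supp p.
Proof. by move=> h; rewrite /= h mem_cat inE eqxx. Qed.

Lemma supp_bound n (p : mpoly K n) v : v \in supp p -> (0 < v <= n)%N.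
Proof.
elim: n p => [//|m IH] p /supp_mem [[-> _]|[j /IH]]; first by rewrite ltnSn.
lia.
Qed.

Definition subS n (S : seq nat) (p : mpoly K n) := {subset supp p <= S}.

Lemma subS0 n S : subS S (0 : mpoly K n).
Proof. by move=> v; rewrite supp0. Qed.

Lemma subSC m S (c : mpoly K m) : subS S c -> subS S (c%:P : mpoly K m.+1).
Proof.
move=> h v /supp_mem [[_ ]|[j]]; first by rewrite size_polyC; case: (_ != _).
rewrite coefC; case: (j == 0)%N; [exact: h | exact: (@subS0 m S v)].
Qed.

Lemma subS1 n S : subS S (1 : mpoly K n).
Proof.
elim: n => [//|m IH].
have -> : (1 : mpoly K m.+1) = (1 : mpoly K m)%:P by [].
exact: subSC.
Qed.

Lemma subSD n S (a b : mpoly K n) : subS S a -> subS S b -> subS S (a + b).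
Proof.
elim: n a b => [//|m IH] a b ha hb v /supp_mem [[-> h]|[j]].
  have := size_add (a : {poly mpoly K m}) b.
  case: (ltnP 1 (size a)) => h1; first by move=> _; apply: ha; apply: mem_supp_top.
  case: (ltnP 1 (size b)) => h2; first by move=> _; apply: hb; apply: mem_supp_top.
  have hh : (1 < size ((a : {poly mpoly K m}) + b)%R)%N by [].
  move=> hs; have := leq_trans hh hs; rewrite leq_max.
  by case/orP=> h3; [move: h1|move: h2]; rewrite leqNgt h3.
rewrite coefD; apply: IH => w wj.
  by apply: ha; exact: mem_supp_coef wj.
by apply: hb; exact: mem_supp_coef wj.
Qed.

Lemma subSN n S (a : mpoly K n) : subS S a -> subS S (- a).
Proof.
elim: n a => [//|m IH] a ha v /supp_mem [[-> h]|[j]].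
  by apply: ha; apply: mem_supp_top; rewrite -(size_opp (a : {poly mpoly K m})).
by rewrite coefN; apply: IH => w wj; apply: ha; exact: mem_supp_coef wj.
Qed.

Lemma subSM n S (a b : mpoly K n) : subS S a -> subS S b -> subS S (a * b).
Proof.
elim: n a b => [//|m IH] a b ha hb v /supp_mem [[-> h]|[j]].
  have := size_mul_leq (a : {poly mpoly K m}) b.
  case: (ltnP 1 (size a)) => h1; first by move=> _; apply: ha; apply: mem_supp_top.
  case: (ltnP 1 (size b)) => h2; first by move=> _; apply: hb; apply: mem_supp_top.
  have hh : (1 < size ((a : {poly mpoly K m}) * b)%R)%N by [].
  move=> hs; have := leq_trans hh hs.
  by move: h1 h2; set x := size _; set y := size _; lia.
have -> : (a * b : mpoly K m.+1)`_j = ((a : {poly mpoly K m}) * b)`_j by [].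
rewrite coefM; move: v; apply: (big_ind (subS S)); first exact: subS0.
  by move=> x y; apply: subSD.
move=> l _; apply: IH => w wj.
  by apply: ha; exact: mem_supp_coef wj.
by apply: hb; exact: mem_supp_coef wj.
Qed.

Lemma subSX n S (a : mpoly K n) k : subS S a -> subS S (a ^+ k).
Proof.
move=> ha; elim: k => [|k IH]; first by rewrite expr0; apply: subS1.
by rewrite exprS; apply: subSM.
Qed.


Lemma foldr_max_ge (s : seq nat) v : v \in s -> (v <= foldr maxn 0 s)%N.
Proof. elim: s => //= x s IH; rewrite inE => /orP [/eqP ->|/IH]; lia. Qed.

Lemma foldr_max_le (s : seq nat) i : (forall v, v \in s -> v <= i)%N -> (foldr maxn 0 s <= i)%N.
Proof.
elim: s => //= x s IH h; rewrite geq_max h ?inE ?eqxx // IH // => v vs.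
by apply: h; rewrite inE vs orbT.
Qed.

Lemma foldr_max_mem (s : seq nat) : (0 < foldr maxn 0 s)%N -> foldr maxn 0 s \in s.
Proof.
elim: s => //= x s IH; set M := foldr maxn 0 s in IH *; move=> h; rewrite inE.
case: (leqP x M) => hx.
  have e : maxn x M = M by lia.
  rewrite IH ?orbT //; lia.
have e : maxn x M = x by lia.
by rewrite eqxx.
Qed.

Lemma lv_ge n (p : mpoly K n) v : v \in supp p -> (v <= lv p)%N.
Proof. exact: foldr_max_ge. Qed.

Lemma lv_mem n (p : mpoly K n) : (0 < lv p)%N -> lv p \in supp p.
Proof. exact: foldr_max_mem. Qed.

Lemma lv_eq n (p : mpoly K n) i : i \in supp p -> (forall v, v \in supp p -> v <= i)%N -> lv p = i.
Proof.
move=> hi hle; apply/eqP; rewrite eqn_leq lv_ge // andbT.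
exact: foldr_max_le.
Qed.

Lemma supp_ini n (p : mpoly K n) : subS (supp p) (ini p).
Proof.
elim: n p => [//|m IH] p; rewrite [ini p]/=; case: ifP => h.
  apply: subSC => v; rewrite lead_coefE; exact: mem_supp_coef.
by apply: subSC => v /IH; apply: mem_supp_coef.
Qed.

Lemma subSX1 m (p : mpoly K m.+1) : (1 < size p)%N -> @subS m.+1 (supp p) ('X : {poly mpoly K m}).
Proof.
move=> h v /supp_mem [[-> _]|[j]]; first exact: mem_supp_top.
by rewrite coefX; case: (j == 1)%N; [exact: (@subS1 m _ v) | exact: (@subS0 m _ v)].
Qed.

Lemma supp_tail n (p : mpoly K n) : subS (supp p) (tail p).
Proof.
elim: n p => [|m IH] p; first exact: subS0.
rewrite [tail p]/=; case: ifP => h.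
  apply: subSD => //; apply: subSN; apply: subSM.
    apply: subSC => v; rewrite lead_coefE; exact: mem_supp_coef.
  by apply: subSX; apply: subSX1.
by apply: subSC => v /IH; apply: mem_supp_coef.
Qed.

Lemma bigmax_pos (T : eqType) (s : seq T) (f : T -> nat) :
  (0 < \max_(c <- s) f c)%N -> exists2 c, c \in s & (0 < f c)%N.
Proof.
elim: s => [|x s IH]; first by rewrite big_nil.
rewrite big_cons => h; case: (ltnP 0 (f x)) => hx.
  by exists x => //; rewrite inE eqxx.
have [c cs fc] : exists2 c, c \in s & (0 < f c)%N by apply: IH; lia.
by exists c => //; rewrite inE cs orbT.
Qed.

Lemma deg_supp n k (p : mpoly K n) : (0 < deg k p)%N -> k \in supp p.
Proof.
elim: n p => [//|m IH] p /=; case: ifP => [/eqP -> h|_].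
  by apply: mem_supp_top; move: h; case: (polyseq p) => [|a [|b l]].
case/bigmax_pos => c cp /IH kc; rewrite mem_cat; apply/orP; right.
by apply/flatten_mapP; exists c.
Qed.

Lemma supp_small m (p : mpoly K m.+1) : (size p <= 1)%N -> supp p = supp p`_0.
Proof.
rewrite [supp p]/=; case: (polyseq p) => [|a [|b l]] //= _.
  by rewrite supp0.
by rewrite cats0.
Qed.

Lemma supp_deg n k (p : mpoly K n) : k \in supp p -> (0 < deg k p)%N.
Proof.
elim: n p => [//|m IH] p /supp_mem [[-> h]|[j kj]]; rewrite [deg _ _]/=.
  by rewrite eqxx; move: h; case: (polyseq p) => [|a [|b l]].
case: (eqVneq k m.+1) => [e|ne].
  by move: (supp_bound kj); rewrite e; lia.

case: (ltnP j (size p)) => jl.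
  apply: (leq_trans (IH _ kj)).
  apply: (@leq_bigmax_seq _ p xpredT (deg k)) => //; exact: mem_nth.
by move: kj; rewrite nth_default // supp0.
Qed.

Lemma lv0 (p : mpoly K 0) : lv p = 0%N.
Proof. by []. Qed.

Lemma lv_bound n (p : mpoly K n) : (lv p <= n)%N.
Proof. by apply: foldr_max_le => v /supp_bound; lia. Qed.

Lemma lv_top m (p : mpoly K m.+1) : lv p = m.+1 -> (1 < size p)%N.
Proof.
move=> hl; have : m.+1 \in supp p by have := lv_mem (p := p); rewrite hl; apply.
case/supp_mem => [[_ //]|[j /supp_bound]]; lia.
Qed.

Lemma lv_small m (p : mpoly K m.+1) : (lv p < m.+1)%N -> (size p <= 1)%N.
Proof.
move=> hl; case: (leqP (size p) 1) => // h.
have := lv_ge (mem_supp_top h); lia.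
Qed.

Lemma psi_ini n i (p : mpoly K n) : (0 < i)%N -> lv p = i ->
  psi i n (ini p) = (lead_coef (psi i n p))%:P.
Proof.
elim: n p => [|m IH] p hi hl; first by move: hl; rewrite lv0; lia.
rewrite !psiS; case: (eqVneq i m.+1) => [ei|ne].
  have h := lv_top (etrans hl ei).
  rewrite [ini p]/= h map_polyC lead_coef_map_inj //; exact: polyC_inj.
have hs : (size p <= 1)%N by apply: lv_small; have := lv_bound p; lia.
have hl0 : lv p`_0 = i by rewrite -hl /lv (supp_small hs).
have hs' : (1 < size p)%N = false by lia.
rewrite [ini p]/= hs' [in RHS](size1_polyC hs) !map_polyC !swapXY_polyC.
rewrite lead_coef_map_inj; last exact: polyC_inj.
rewrite -map_polyC; congr (map_poly _ _); first by apply: IH.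
all: exact: polyC_inj.
Qed.

Fixpoint var (i n : nat) : mpoly K n :=
  match n return mpoly K n with
  | 0 => 0
  | m.+1 => if i == m.+1 then ('X : {poly mpoly K m}) else ((var i m)%:P : {poly mpoly K m})
  end.

Lemma psi_var i n : (0 < i <= n)%N -> psi i n (var i n) = 'X.
Proof.
elim: n => [|m IH] hi; first by lia.
rewrite psiS /=; case: ifP => [/eqP ->|/negbT ne]; first by rewrite eqxx map_polyX.
rewrite (negbTE ne).
rewrite map_polyC swapXY_polyC -(map_polyX polyC); congr (map_poly _ _); apply: IH; lia.
Qed.

Lemma supp_var i n : subS [:: i] (var i n).
Proof.
elim: n => [|m IH]; first exact: subS0.
rewrite /=; case: (eqVneq i m.+1) => [->|ne]; last exact: subSC.
move=> v /supp_mem [[-> _]|[j]]; first by rewrite inE.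
by rewrite coefX; case: (j == 1)%N; [exact: (@subS1 m _ v) | exact: (@subS0 m _ v)].
Qed.

Lemma max_help (x y z : nat) : (x.-1 < z.-1 -> y.-1 < z.-1 -> maxn y x < z)%N.
Proof. lia. Qed.

Lemma help2 (a t : nat) : ((a + t).-1 < t -> a = 0)%N.
Proof. lia. Qed.

Lemma prem_unique n i (T : mpoly K n) e P Q R Q' R' :
  ini T ^+ e * P = Q * T + R -> ini T ^+ e * P = Q' * T + R' ->
  (deg i R < deg i T)%N -> (deg i R' < deg i T)%N -> R = R'.
Proof.
move=> H1 H2 d1 d2.
have E : (Q - Q') * T = R' - R.
  by rewrite mulrBl -[Q * T](addrK R) -[Q' * T](addrK R') -H1 -H2; ring.
have E' := congr1 (psi i n) E; rewrite rmorphM !rmorphB /= in E'.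
rewrite !psi_deg in d1 d2.
have hT : psi i n T != 0 by rewrite -size_poly_eq0; lia.
have hs : (size (psi i n R' - psi i n R)%R < size (psi i n T))%N.
  apply: leq_ltn_trans (size_polyD _ _) _; rewrite size_polyN; exact: max_help.
case: (eqVneq (psi i n Q - psi i n Q') 0) => hq.
  move: E'; rewrite hq mul0r => /eqP; rewrite eq_sym subr_eq0 => /eqP.
  move=> h; exact: (@psi_inj i n _ _ (esym h)).
by move: hs; rewrite -E' size_mul //; move/help2/eqP; rewrite size_poly_eq0 (negbTE hq).
Qed.

Lemma prem_exists n i (T : mpoly K n) S :
  (0 < i)%N -> lv T = i -> subS S T -> (forall v, v \in S -> v <= i)%N ->
  forall N (P : mpoly K n), (deg i P <= N)%N -> subS S P ->
  forall e, ((deg i P).+1 - deg i T <= e)%N ->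
  exists Q R, ini T ^+ e * P = Q * T + R /\ (deg i R < deg i T)%N /\ subS S R.
Proof.
move=> hi hT hTS hS.
have iT : i \in supp T by have := lv_mem (p := T); rewrite hT; apply.
have d1 : (0 < deg i T)%N by apply: supp_deg.
have iS : i \in S by apply: hTS.
have iTS : subS S (ini T) by move=> v /supp_ini /hTS.
have base : forall (P : mpoly K n) e, (deg i P < deg i T)%N -> subS S P ->
   exists Q R, ini T ^+ e * P = Q * T + R /\ (deg i R < deg i T)%N /\ subS S R.
  move=> P e hd hP; exists 0, (ini T ^+ e * P); split; first by rewrite mul0r add0r.
  split; last by apply: subSM => //; apply: subSX.
  apply: leq_ltn_trans hd; rewrite !psi_deg rmorphM rmorphXn /= psi_ini //.
  rewrite -polyC_exp mul_polyC -!subn1; apply: leq_sub2r; exact: size_scale_leq.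
elim=> [|N IH] P hN hP e he.
  by apply: base => //; lia.
case: (ltnP (deg i P) (deg i T)) => hd; first exact: base.
set D := deg i P in hN he hd; set d := deg i T in hd he d1 base.
have iP : i \in supp P by apply: deg_supp; rewrite -/D; lia.
have hlP : lv P = i by apply: lv_eq => // v /hP /hS.
have iPS : subS S (ini P) by move=> v /supp_ini /hP.
have hin : (0 < i <= n)%N by have := lv_bound T; lia.
set w := var i n ^+ (D - d).
have wS : subS S w by apply: subSX => v /supp_var; rewrite inE => /eqP ->.
set P1 := ini T * P - ini P * w * T.
have P1S : subS S P1 by apply: subSD; [apply: subSM | apply: subSN; apply: subSM; [apply: subSM|]].
have hD1 : (deg i P1 < D)%N.
  have eP : size (psi i n P) = D.+1 by rewrite /D psi_deg; move: d1 hd; rewrite /d psi_deg /D psi_deg; lia.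
  have eT : size (psi i n T) = d.+1 by rewrite /d psi_deg; move: d1; rewrite /d psi_deg; lia.
  rewrite psi_deg; suff : (size (psi i n P1) <= D)%N by lia.
  rewrite /P1 /w rmorphB !rmorphM rmorphXn /= !psi_ini // psi_var //.
  apply/leq_sizeP => j hj; rewrite coefB coefCM -mulrA coefCM coefXnM.
  have -> : (j < D - d)%N = false by lia.
  case: (ltnP D j) => hj'.
    rewrite !nth_default ?mulr0 ?subrr // ?eP ?eT; lia.
  have ej : j = D by lia.
  rewrite ej (_ : (D - (D - d))%N = d); last by lia.
  by rewrite !lead_coefE eP eT /= mulrC subrr.
have [Q1 [R1 [H1 [H2 H3]]]] : exists Q R, ini T ^+ (e - 1) * P1 = Q * T + R /\ (deg i R < d)%N /\ subS S R.
  apply: IH => //; lia.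
exists (Q1 + ini T ^+ (e - 1) * ini P * w), R1; split => //.
have ee : e = (e - 1).+1 by lia.
have -> : ini T ^+ e = ini T * ini T ^+ (e - 1) by rewrite -exprS -ee.
set c := ini T; set l := ini P; set c' := c ^+ (e - 1).
have -> : c * c' * P = c' * (c * P - l * w * T) + c' * l * w * T by ring.
by rewrite H1; ring.
Qed.

Lemma prem_supp n (P T : mpoly K n) i : (0 < i)%N -> lv P = i -> lv T = i ->
  subS (supp P ++ supp T) (prem P T).
Proof.
move=> hi hP hT; set S := supp P ++ supp T.
have hS : forall v, v \in S -> (v <= i)%N.
  move=> v; rewrite mem_cat => /orP [] /lv_ge; [rewrite hP|rewrite hT] => //.
have PS : subS S P by move=> v vs; rewrite mem_cat vs.
have TS : subS S T by move=> v vs; rewrite mem_cat vs orbT.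
have [Q [R [H1 [H2 H3]]]] := prem_exists hi hT TS hS (leqnn (deg i P)) PS (leqnn _).
have hp : is_prem (lv T) P T (prem P T).
  rewrite /prem; apply: epsilon_spec; exists R; rewrite hT; exists Q; split => //.
case: hp => Q' []; rewrite hT => H1' H2'.
by rewrite (prem_unique H1' H1 H2' H2).
Qed.

Lemma in_suppS n (S : seq (mpoly K n)) v :
  v \in suppS S -> exists2 p, p \in S & v \in supp p.
Proof. by move/flatten_mapP. Qed.

Lemma in_suppS' n (S : seq (mpoly K n)) v p : p \in S -> v \in supp p -> v \in suppS S.
Proof. by move=> ps vp; apply/flatten_mapP; exists p. Qed.

Lemma subgraph_step n (F P P' : seq (mpoly K n)) :
  chordal F -> subgraph P F ->
  (forall q, q \in P' ->
     (exists2 p, p \in P & subS (supp p) q) \/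
     (exists p t i, [/\ p \in P, t \in P, (0 < i)%N, lv p = i & lv t = i] /\ subS (supp p ++ supp t) q)) ->
  subgraph P' F.
Proof.
move=> hch [hV hE] hq; split.
  move=> v /in_suppS [q qP' vq]; case: (hq q qP') => [[p pP sp]|[p [t [i [[pP tP _ _ _] st]]]]].
    by apply: hV; apply: in_suppS' pP (sp _ vq).
  move: (st _ vq); rewrite mem_cat => /orP [] vs; apply: hV.
    exact: in_suppS' pP vs.
  exact: in_suppS' tP vs.
move=> a b [ab [q qP' /andP [aq bq]]].
case: (hq q qP') => [[p pP sp]|[p [t [i [[pP tP hi hp ht] st]]]]].
  apply: hE; split => //; exists p => //; by rewrite (sp _ aq) (sp _ bq).
have iF : i \in suppS F.
  apply: hV; apply: (in_suppS' pP); have := lv_mem (p := p); rewrite hp; apply; done.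
have C : forall x, x \in supp p ++ supp t -> x = i \/ (x < i)%N /\ edge F x i.
  move=> x; rewrite mem_cat => /orP [] xs.
    have iu : i \in supp p by have := lv_mem (p := p); rewrite hp; apply.
    have xi := lv_ge xs; rewrite hp in xi.
    case: (eqVneq x i) => [->|ne]; [by left | right]; split; first by rewrite ltn_neqAle ne.
    apply: hE; split; first exact/eqP.
    by exists p => //; rewrite xs iu.
  have iu : i \in supp t by have := lv_mem (p := t); rewrite ht; apply.
  have xi := lv_ge xs; rewrite ht in xi.
  case: (eqVneq x i) => [->|ne]; [by left | right]; split; first by rewrite ltn_neqAle ne.
  apply: hE; split; first exact/eqP.
  by exists t => //; rewrite xs iu.
exact: (hch i iF a b (C _ (st _ aq)) (C _ (st _ bq)) ab).
Qed.

Lemma wang_inv n (F : seq (mpoly K n)) P Q i :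
  chordal F -> wang_node F P Q i -> subgraph P F.
Proof.
move=> hch; elim => //.
- move=> P0 Q0 i0 T0 _ IH hi _ hT _; apply: (subgraph_step hch IH) => q.
  move: (hT); rewrite mem_filter => /andP [/eqP hlT TP].
  rewrite mem_cat => /orP [|]; first by rewrite mem_filter => /andP [_ qP]; left; exists q => // v.
  rewrite inE => /orP [/eqP ->|]; first by left; exists T0 => // v.
  case/mapP => p; rewrite mem_filter => /andP [/eqP hlp pP] ->.
  right; exists p, T0, i0; split; [by split | exact: (prem_supp hi hlp hlT)].
- move=> P0 Q0 i0 T0 _ IH hi _ hT _; apply: (subgraph_step hch IH) => q.
  move: (hT); rewrite mem_filter => /andP [_ TP].
  rewrite mem_cat => /orP [|]; first by rewrite mem_filter => /andP [_ qP]; left; exists q => // v.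
  rewrite !inE => /orP [/eqP ->|/eqP ->]; left; exists T0 => //.
    exact: supp_ini.
  exact: supp_tail.
Qed.
End S.

Theorem corollary4p4 (K : fieldType) (n : nat) (F : seq (mpoly K n)) :
  chordal F ->
  forall (T Q : seq (mpoly K n)),
    wang_node F T Q 0 ->
    (forall p, p \in T -> supp p = [::] -> p = 0) ->
    subgraph T F.
Proof. by move=> hch T Q hw _; exact: (wang_inv hch hw). Qed.
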